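(* Let $q,d\geq 2$ be integers and let $\psi\in\mathbb{Z}$, $\psi\neq 0$. Then for every $\theta,x\in\mathbb{Z}$, the natural density of the set $\{n\in\mathbb{N}: \psi w_q(n)+\theta n+x\equiv 0\pmod d\}$ exists and equals $$\begin{cases}\frac{1}{d}\gcd(\psi,\theta,d) & \text{if } \gcd(\psi,\theta,d)\mid\gcd(x,d),\\ 0 & \text{otherwise.}\end{cases}$$
   Context: For an integer $q\geq 2$ and $n\in\mathbb{N}$: $v_q(0)=0$ and, for $n>0$, $v_q(n)=\max\{k: q^k\mid n\}$; $w_q(n)=\sum_{i=0}^n v_q(i)$. The natural density of $T\subseteq\mathbb{N}$ is $\lim_{N\to\infty}|\{n\in T: 0\leq n<N\}|/N$. *)

(* Defs.v *)
From mathcomp Require Import all_boot all_order all_algebra.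
From mathcomp Require Import all_classical all_reals all_analysis.
Set Implicit Arguments. Unset Strict Implicit. Unset Printing Implicit Defensive.
Import Order.TTheory GRing.Theory Num.Theory numFieldNormedType.Exports.

(* v_q(n) = max {k : q^k | n} for n > 0, and v_q(0) = 0.
   For q >= 2 and n > 0, any k with q^k | n satisfies k < n.+1. *)
Definition vq (q n : nat) : nat :=
  if n == 0 then 0 else \max_(k < n.+1 | q ^ k %| n) k.

Definition wq (q n : nat) : nat := \sum_(0 <= i < n.+1) vq q i.

Definition count_below (P : pred nat) (N : nat) : nat := #|[set n : 'I_N | P n]|.

Local Open Scope classical_set_scope.
Local Open Scope ring_scope.
Definition has_density (R : realType) (P : pred nat) (l : R) : Prop :=
  (fun N : nat => ((count_below P N)%:R / N%:R : R)) @ \oo --> l.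

(* Main.v *)
Require Import Defs.
From mathcomp Require Import all_boot all_order all_algebra.
From mathcomp Require Import all_classical all_reals all_analysis.
From mathcomp Require Import zify ring lra.
Set Implicit Arguments. Unset Strict Implicit. Unset Printing Implicit Defensive.
Import Order.TTheory GRing.Theory Num.Theory.



Section P1.
Variable q : nat.
Hypothesis q2 : 1 < q.

Lemma vq_spec n : 0 < n -> q ^ (vq q n) %| n /\ ~~ (q ^ (vq q n).+1 %| n).
Proof.
move=> n0; rewrite /vq; have -> : (n == 0) = false by case: n n0.
have [|i0 Pi0 E] := @eq_bigmax_cond _ [pred k : 'I_n.+1 | q ^ k %| n] (fun k => nat_of_ord k).
  apply/card_gt0P; exists ord0; by rewrite inE expn0 dvd1n.
rewrite E; split; first by [].
apply/negP=> Hd.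
have lt : (i0.+1 < n.+1).
  rewrite ltnS; apply: (@leq_trans (q ^ i0.+1)).
    by apply: ltnW; apply: ltn_expl.
  by apply: dvdn_leq.
have := @leq_bigmax_cond _ [pred k : 'I_n.+1 | q ^ k %| n] (fun k => nat_of_ord k) (Ordinal lt) Hd.
by rewrite E /= ltnn.
Qed.

Lemma vq_uniq n a b : q ^ a %| n -> ~~ (q ^ a.+1 %| n) -> q ^ b %| n -> ~~ (q ^ b.+1 %| n) -> a = b.
Proof.
move=> Ha Na Hb Nb; apply/eqP; rewrite eqn_leq; apply/andP; split.
  rewrite leqNgt; apply/negP => lt; move/negP: Nb; apply.
  by apply: dvdn_trans Ha; apply: dvdn_exp2l.
rewrite leqNgt; apply/negP => lt; move/negP: Na; apply.
by apply: dvdn_trans Hb; apply: dvdn_exp2l.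
Qed.

Lemma vq0 : vq q 0 = 0. Proof. by []. Qed.

Lemma vq_ndvd n : ~~ (q %| n) -> vq q n = 0.
Proof.
move=> nd; have n0 : 0 < n by case: n nd => //; rewrite dvdn0.
have [H1 H2] := vq_spec n0.
by apply: (vq_uniq H1 H2); rewrite ?expn0 ?dvd1n ?expn1.
Qed.

Lemma vq_mul m : 0 < m -> vq q (q * m) = (vq q m).+1.
Proof.
move=> m0; have qm0 : 0 < q * m by rewrite muln_gt0 m0 andbT ltnW.
have [H1 H2] := vq_spec qm0; have [H3 H4] := vq_spec m0.
apply: (vq_uniq H1 H2).
  by rewrite expnS dvdn_pmul2l // ltnW.
by rewrite expnS dvdn_pmul2l // ltnW.
Qed.

Lemma wqS n : wq q n.+1 = wq q n + vq q n.+1.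
Proof. by rewrite /wq big_nat_recr. Qed.

Lemma wq_off m r : r < q -> wq q (q * m + r) = wq q (q * m).
Proof.
elim: r => [|r IH] lt; first by rewrite addn0.
rewrite addnS wqS IH ?(ltnW lt) // vq_ndvd ?addn0 //.
by rewrite -addnS dvdn_addr ?dvdn_mulr // gtnNdvd.
Qed.


End P1.
Section P1b.
Variable q : nat.
Hypothesis q2 : 1 < q.

Lemma wq0 : wq q 0 = 0. Proof. by rewrite /wq big_nat1. Qed.

Lemma wq_rec m r : r < q -> wq q (q * m + r) = m + wq q m.
Proof.
move=> lr; rewrite wq_off //.
elim: m => [|m IH]; first by rewrite muln0 wq0.
have E : q * m.+1 = (q * m + q.-1).+1 by rewrite mulnS; case: q q2 => // q' _; lia.
rewrite E wqS wq_off ?prednK ?ltn_pred //; last by apply: ltnW.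
rewrite IH -E vq_mul // wqS.
lia.
Qed.

Definition Sg L := \sum_(i < L) q ^ i.

Lemma SgS L : Sg L.+1 = Sg L + q ^ L.
Proof. by rewrite /Sg big_ord_recr. Qed.

Lemma wq_block L a b : b < q ^ L -> wq q (q ^ L * a + b) = a * Sg L + wq q a + wq q b.
Proof.
elim: L b => [|L IH] b lb.
  move: lb; rewrite ltnS leqn0 => /eqP ->.
  by rewrite /Sg big_ord0 wq0 expn0 mul1n muln0 !addn0.
have q0 : 0 < q by apply: ltnW.
rewrite (divn_eq b q) (mulnC (b %/ q)).
have lb1 : b %/ q < q ^ L by rewrite ltn_divLR // -expnSr.
have -> : q ^ L.+1 * a + (q * (b %/ q) + b %% q) = q * (q ^ L * a + b %/ q) + b %% q.
  by rewrite expnS; ring.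
rewrite !wq_rec ?ltn_pmod // IH // SgS; ring.
Qed.
End P1b.


Section P2.
Variables q d : nat.
Hypothesis q2 : 1 < q.
Hypothesis d2 : 1 < d.

Lemma modD a a' b b' : a = a' %[mod d] -> b = b' %[mod d] -> a + b = a' + b' %[mod d].
Proof. by move=> H1 H2; rewrite -modnDm H1 H2 modnDm. Qed.
Lemma modM a a' b b' : a = a' %[mod d] -> b = b' %[mod d] -> a * b = a' * b' %[mod d].
Proof. by move=> H1 H2; rewrite -modnMm H1 H2 modnMm. Qed.

Lemma d0 : 0 < d. Proof. exact: ltnW. Qed.

Definition st L : 'I_d * 'I_d := (Ordinal (ltn_pmod (Sg q L) d0), Ordinal (ltn_pmod (q ^ L) d0)).

Lemma stS i j : st i = st j -> st i.+1 = st j.+1.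
Proof.
case=> E1 E2; congr pair; apply: val_inj => /=.
  by rewrite !SgS -modnDm E1 E2 modnDm.
by rewrite !expnS -modnMmr E2 modnMmr.
Qed.

Lemma st_shift i j r : st i = st j -> st (i + r) = st (j + r).
Proof. by move=> E; elim: r => [|r IH]; rewrite ?addn0 // !addnS; apply: stS. Qed.

Lemma st_period : exists i P, 0 < P /\ forall k, st (i + k * P) = st i.
Proof.
pose f := fun k : 'I_(d * d).+1 => st k.
have : ~~ injectiveb f.
  apply/negP => /injectiveP inj; have := leq_card f inj.
  by rewrite card_prod !card_ord ltnn.
case/injectivePn => x [y] nxy fxy.
have key : forall i j : nat, i < j -> st i = st j -> exists i P, 0 < P /\ forall k, st (i + k * P) = st i.
  move=> i j lij E; exists i, (j - i); split; first by rewrite subn_gt0.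
  elim=> [|k IH]; first by rewrite mul0n addn0.
  have -> : i + k.+1 * (j - i) = j + k * (j - i) by lia.
  by rewrite -(st_shift _ E) IH.
have : (x : nat) != y by apply: contra nxy => /eqP h; apply/eqP/val_inj.
rewrite neq_ltn => /orP [] lt.
  by apply: (key _ _ lt).
by apply: (key _ _ lt).
Qed.

Lemma wq1 : wq q 1 = 0.
Proof. by have := wq_rec q2 0 q2; rewrite muln0 add0n wq0 => ->. Qed.

Lemma wqq : wq q q = 1.
Proof. by have := wq_rec q2 1 (ltnW q2); rewrite muln1 addn0 wq1 => ->. Qed.

Lemma surj u v : exists b, wq q b = u %[mod d] /\ b = v %[mod d].
Proof.
have [i [P [P0 HP]]] := st_period.
pose Sc := Sg q i; pose Qc := q ^ i.
have HS : forall k, Sg q (i + k * P) = Sc %[mod d].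
  by move=> k; have := HP k; case.
have HQ : forall k, q ^ (i + k * P) = Qc %[mod d].
  by move=> k; have := HP k; case.
have step : forall b x y, wq q b = x %[mod d] -> b = y %[mod d] ->
   (exists b', wq q b' = x + Sc %[mod d] /\ b' = y + Qc %[mod d]) /\
   (exists b', wq q b' = x + (q * Sc + 1) %[mod d] /\ b' = y + q * Qc %[mod d]).
  move=> b x y Hx Hy.
  have lb : b < q ^ (i + b * P).
    apply: (leq_trans (ltn_expl b q2)); apply: leq_pexp2l; first exact: ltnW.
    by nia.
  split.
    exists (q ^ (i + b * P) * 1 + b); rewrite wq_block // wq1 mul1n addn0.
    rewrite muln1; split; first by rewrite -modnDm HS Hx modnDm addnC.
    by rewrite -modnDm HQ Hy modnDm addnC.
  exists (q ^ (i + b * P) * q + b); rewrite wq_block // wqq.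
  split.
    apply: etrans (_ : (q * Sc + 1 + x) %% d = _); last by congr (_ %% d); lia.
    by apply: modD => //; apply: modD => //; apply: modM.
  apply: etrans (_ : (Qc * q + y) %% d = _); last by congr (_ %% d); lia.
  by apply: modD => //; apply: modM.
have iter2 : forall n2, exists b, wq q b = wq q v + n2 * Sc %[mod d] /\ b = v + n2 * Qc %[mod d].
  elim=> [|n2 [b [Hx Hy]]]; first by exists v; rewrite !mul0n !addn0.
  have [[b' [H1 H2]] _] := step _ _ _ Hx Hy.
  by exists b'; rewrite H1 H2 !mulSn; split; congr (_ %% d); lia.
have iter1 : forall n1 n2, exists b, wq q b = wq q v + n1 * (q * Sc + 1) + n2 * Sc %[mod d]
    /\ b = v + n1 * (q * Qc) + n2 * Qc %[mod d].
  move=> n1 n2; elim: n1 => [|n1 [b [Hx Hy]]].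
    by have [b [H1 H2]] := iter2 n2; exists b; rewrite !mul0n !addn0.
  have [_ [b' [H1 H2]]] := step _ _ _ Hx Hy.
  by exists b'; rewrite H1 H2 !mulSn; split; congr (_ %% d); lia.
pose n1 := u + (d - 1) * wq q v.
have [b [H1 H2]] := iter1 n1 (n1 * q * (d - 1)).
exists b; split.
  rewrite H1; have -> : wq q v + n1 * (q * Sc + 1) + n1 * q * (d - 1) * Sc = (wq q v + n1 * q * Sc) * d + u.
    rewrite /n1; case: d d2 => // d' _; rewrite subSS subn0; ring.
  by rewrite modnMDl.
rewrite H2; have -> : v + n1 * (q * Qc) + n1 * q * (d - 1) * Qc = (n1 * q * Qc) * d + v.
  case: d d2 => // d' _; rewrite subSS subn0; ring.
by rewrite modnMDl.
Qed.
End P2.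


Lemma split_sum (R : Type) (idx : R) (op : Monoid.com_law idx) m k (F : nat -> R) :
  \big[op/idx]_(0 <= n < m * k) F n = \big[op/idx]_(0 <= i < k) \big[op/idx]_(0 <= j < m) F (m * i + j).
Proof.
elim: k => [|k IH]; first by rewrite muln0 !big_geq.
rewrite big_nat_recr //= -IH mulnS addnC (@big_cat_nat _ _ _ (m * k)) ?leq_addr //=.
congr (op _ _).
rewrite -{1}(add0n (m * k)) big_addn addKn.
by apply: eq_bigr => j _; rewrite addnC.
Qed.

Section Count1.
Local Open Scope ring_scope.

Definition F1 (m : nat) (psi t : int) : nat := \sum_(0 <= a < m) ((m%:Z %| (psi * a%:Z + t)%R)%Z : nat).

Lemma F1_psi m psi t : F1 m psi (t + psi) = F1 m psi t.
Proof.
rewrite /F1.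
pose G := fun a : nat => ((m%:Z %| (psi * a%:Z + t)%R)%Z : nat).
have -> : \sum_(0 <= a < m) ((m%:Z %| (psi * a%:Z + (t + psi))%R)%Z : nat) = \sum_(0 <= a < m) G a.+1.
  apply: eq_bigr => a _; rewrite /G intS; congr (nat_of_bool (_ %| _)%Z); ring.
apply/eqP; rewrite -(eqn_add2l (G 0%N)) -big_nat_recl // big_nat_recr //= addnC; apply/eqP; congr (_ + _)%N.
rewrite /G mulr0 add0r; congr (nat_of_bool _).
by rewrite rpredDl // dvdz_mull.
Qed.

Lemma F1_m m psi t k : F1 m psi (t + m%:Z * k) = F1 m psi t.
Proof.
apply: eq_bigr => a _; congr (nat_of_bool _).
by rewrite addrA rpredDr // dvdz_mulr.
Qed.

Lemma F1_psik m psi t k : F1 m psi (t + psi * k) = F1 m psi t.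
Proof.
have Hn : forall t (n : nat), F1 m psi (t + psi * n%:Z) = F1 m psi t.
  move=> t' n; elim: n => [|n IH]; first by rewrite mulr0 addr0.
  have -> : t' + psi * n.+1%:Z = (t' + psi * n%:Z) + psi by rewrite intS; ring.
  by rewrite F1_psi IH.
case: k => n; first exact: Hn.
rewrite -(Hn (t + psi * Negz n) n.+1).
congr (F1 _ _ _); rewrite NegzE; ring.
Qed.

End Count1.

Section Count1b.
Local Open Scope ring_scope.

Lemma F1_0 m psi : (0 < m)%N -> F1 m psi 0 = gcdn `|psi| m.
Proof.
move=> m0; set h := gcdn `|psi| m.
have h0 : (0 < h)%N by rewrite gcdn_gt0 m0 orbT.
have hm : (h %| m)%N := dvdn_gcdr _ _.
have hp : (h %| `|psi|)%N := dvdn_gcdl _ _.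
set m' := (m %/ h)%N; set p' := (`|psi| %/ h)%N.
have Em : m = (m' * h)%N by rewrite /m' divnK.
have Ep : `|psi|%N = (p' * h)%N by rewrite /p' divnK.
have cop : coprime m' p'.
  rewrite /coprime -(eqn_pmul2r h0) mul1n muln_gcdl -Em -Ep.
  by rewrite /h gcdnC.
have m'0 : (0 < m')%N by move: m0; rewrite Em muln_gt0 => /andP[].
rewrite /F1.
have -> : \sum_(0 <= a < m) ((m%:Z %| (psi * a%:Z + 0)%R)%Z : nat) = \sum_(0 <= a < m' * h) ((m' %| a)%N : nat).
  have -> : index_iota 0 m = index_iota 0 (m' * h) by rewrite -Em.
  apply: eq_bigr => a _; congr nat_of_bool.
  rewrite addr0 dvdzE abszM absz_nat Ep Em -mulnA [(h * a)%N]mulnC mulnA dvdn_pmul2r //.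
  by rewrite Gauss_dvdr.
rewrite split_sum.
rewrite (eq_bigr (fun _ => 1%N)); first by rewrite sum_nat_const_nat subn0 muln1.
move=> i _.
rewrite (eq_bigr (fun j => ((m' %| j)%N : nat))); last by move=> j _; rewrite dvdn_addr // dvdn_mulr.
case: m' m'0 {Em cop} => // m'' _.
rewrite big_nat_recl // dvdn0 big_nat_cond big1 // => j /andP[/andP[_ lj] _].
by rewrite gtnNdvd.
Qed.

Lemma count1 m psi t : (0 < m)%N ->
  F1 m psi t = (gcdn `|psi| m * ((gcdn `|psi| m)%:Z %| t)%Z : nat)%N.
Proof.
move=> m0; set h := gcdn `|psi| m.
have Eh : gcdz psi m%:Z = h%:Z by rewrite /gcdz absz_nat.
case: (boolP (h%:Z %| t)%Z) => ht.
  rewrite muln1 /h -(F1_0 psi m0) -/h.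
  have [c ->] := dvdzP ht.
  have [u [v Huv]] := Bezoutz psi m%:Z.
  rewrite -Eh -Huv.
  have -> : c * (u * psi + v * m%:Z) = 0 + psi * (c * u) + m%:Z * (c * v) by ring.
  by rewrite F1_m F1_psik.
rewrite muln0 /F1 big1 // => a _.
apply/eqP; rewrite eqb0; apply: contra ht => Hd.
have h1 : (h%:Z %| m%:Z)%Z by rewrite -Eh dvdz_gcdr.
have h2 : (h%:Z %| psi)%Z by rewrite -Eh dvdz_gcdl.
have := dvdz_trans h1 Hd.
by rewrite rpredDl // dvdz_mulr.
Qed.
End Count1b.


Section P4.
Variables q d : nat.
Hypothesis q2 : 1 < q.
Hypothesis d2 : 1 < d.

Local Notation G := ('I_d * 'I_d)%type.
Local Notation d0 := (d0 d2).

Definition tr L (s : G) b : G :=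
  (Ordinal (ltn_pmod (s.1 + Sg q L * s.2 + wq q b) d0), Ordinal (ltn_pmod (q ^ L * s.2 + b) d0)).

Definition Pm L (s t : G) : nat := \sum_(0 <= b < q ^ L) ((tr L s b == t) : nat).

Lemma SgD K L : Sg q (K + L) = Sg q K + q ^ K * Sg q L.
Proof.
elim: L => [|L IH]; first by rewrite addn0 /Sg big_ord0 muln0 addn0.
by rewrite addnS !SgS IH expnD; ring.
Qed.

Lemma tr_comp K L s a b : b < q ^ L -> tr L (tr K s a) b = tr (K + L) s (q ^ L * a + b).
Proof.
move=> lb; congr pair; apply: val_inj => /=.
  rewrite wq_block // SgD.
  apply: etrans (_ : ((s.1 + Sg q K * s.2 + wq q a) + Sg q L * (q ^ K * s.2 + a) + wq q b) %% d = _).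
    apply: modD => //; apply: modD; first exact: modn_mod.
    by apply: modM => //; apply: modn_mod.
  by congr (_ %% d); ring.
apply: etrans (_ : (q ^ L * (q ^ K * s.2 + a) + b) %% d = _).
  by apply: modD => //; apply: modM => //; apply: modn_mod.
by congr (_ %% d); rewrite expnD; ring.
Qed.

Lemma pick_sum (x : G) (F : G -> nat) : F x = \sum_(s : G) ((x == s) : nat) * F s.
Proof.
rewrite (bigD1 x) //= eqxx mul1n big1 ?addn0 // => s /negbTE.
by rewrite eq_sym => ->.
Qed.

Lemma CK K L s t : Pm (K + L) s t = \sum_(u : G) Pm K s u * Pm L u t.
Proof.
rewrite /Pm expnD mulnC split_sum.
have -> : \sum_(0 <= i < q ^ K) \sum_(0 <= j < q ^ L) ((tr (K + L) s (q ^ L * i + j) == t) : nat)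
   = \sum_(0 <= i < q ^ K) \sum_(0 <= j < q ^ L) ((tr L (tr K s i) j == t) : nat).
  apply: eq_bigr => i _; rewrite big_nat_cond [RHS]big_nat_cond.
  by apply: eq_bigr => j /andP[/andP[_ lj] _]; rewrite tr_comp.
under eq_bigr do rewrite (pick_sum (tr K s _) (fun u => \sum_(0 <= j < q ^ L) ((tr L u j == t) : nat))).
rewrite exchange_big /=; apply: eq_bigr => u _.
by rewrite big_distrl.
Qed.

Lemma row_sum L s : \sum_(t : G) Pm L s t = q ^ L.
Proof.
rewrite /Pm exchange_big /=.
rewrite (eq_bigr (fun _ => 1)); first by rewrite sum_nat_const_nat subn0 muln1.
move=> b _; rewrite [1](_ : 1 = (fun _ => 1) (tr L s b)) //.
by rewrite (pick_sum (tr L s b) (fun _ => 1)); apply: eq_bigr => u _; rewrite muln1.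
Qed.


Lemma modeq_dvdz x y : (x %% d == y %% d) = (d%:Z %| (x%:Z - y%:Z)%R)%Z.
Proof. by rewrite -eqz_mod_dvd !modz_nat eqz_nat. Qed.

Lemma one_sol c (t1 : 'I_d) : \sum_(s1 < d) ((((s1 + c) %% d) == t1) : nat) = 1.
Proof.
have -> : \sum_(s1 < d) ((((s1 + c) %% d) == t1) : nat) = F1 d 1 (c%:Z - t1%:Z)%R.
  rewrite /F1 big_mkord; apply: eq_bigr => i _; congr nat_of_bool.
  rewrite -[X in _ == X](modn_small (ltn_ord t1)) modeq_dvdz; congr (_ %| _)%Z.
  by rewrite PoszD mul1r; ring.
rewrite count1; last exact: d0.
 by rewrite gcd1n dvd1z.
Qed.

Lemma col_sum L t : \sum_(s : G) Pm L s t = q ^ L.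
Proof.
case: t => t1 t2.
rewrite /Pm exchange_big /=.
set g := gcdn `|Posz (q ^ L)| d.
have E : forall b, \sum_(s : G) ((tr L s b == (t1, t2)) : nat) = (g * ((g%:Z %| (b%:Z - t2%:Z)%R)%Z : nat))%N.
  move=> b; rewrite (eq_bigr (fun s : G => ((tr L (s.1, s.2) b == (t1, t2)) : nat))); last by move=> [].
  rewrite -(pair_bigA _ (fun s1 s2 => ((tr L (s1, s2) b == (t1, t2)) : nat))) /= exchange_big /=.
  rewrite -count1 ?d0 // /F1 big_mkord; apply: eq_bigr => s2 _.
  under eq_bigr do rewrite /tr xpair_eqE -!val_eqE /= -addnA -mulnb.
  rewrite -big_distrl /= one_sol mul1n -[X in _ == X](modn_small (ltn_ord t2)) modeq_dvdz.
  by congr (nat_of_bool (_ %| _)%Z); rewrite PoszD PoszM; ring.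
under eq_bigr do rewrite E.
rewrite -big_distrr /=.
have g0 : 0 < g by rewrite gcdn_gt0 d0 orbT.
have gq : (g %| q ^ L) by rewrite /g absz_nat dvdn_gcdl.
have -> : index_iota 0 (q ^ L) = index_iota 0 (g * (q ^ L %/ g)) by rewrite mulnC divnK.
rewrite split_sum.
rewrite (eq_bigr (fun _ => 1)).
  by rewrite sum_nat_const_nat subn0 muln1 mulnC divnK.
move=> i _; transitivity (F1 g 1 (g%:Z * i%:Z - t2%:Z)%R).
  rewrite /F1; apply: eq_bigr => j _; congr (nat_of_bool (_ %| _)%Z).
  by rewrite PoszD PoszM; ring.
by rewrite count1 // gcd1n dvd1z.
Qed.

Lemma le_sum_nat (F : nat -> nat) b n : b < n -> F b <= \sum_(0 <= i < n) F i.
Proof.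
move=> lb; rewrite big_mkord (bigD1 (Ordinal lb)) //=; exact: leq_addr.
Qed.

Lemma bound k : exists M, forall u v, u * d + v < k -> v < d ->
  exists b, b < M /\ wq q b = u %[mod d] /\ b = v %[mod d].
Proof.
elim: k => [|k [M HM]]; first by exists 0.
have [b0 [H1 H2]] := surj q2 d2 (k %/ d) (k %% d).
exists (maxn M b0.+1) => u v luv lv.
rewrite ltnS leq_eqVlt in luv; case/orP: luv => [/eqP E|lt].
  exists b0; split; first by rewrite leq_max ltnSn orbT.
  have Eu : k %/ d = u by rewrite -E divnMDl ?d0 // divn_small // addn0.
  have Ev : k %% d = v by rewrite -E modnMDl modn_small.
  by rewrite -Eu -Ev.
have [b [lb Hb]] := HM u v lt lv.
by exists b; split => //; rewrite leq_max lb.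
Qed.

Lemma doeblin : exists L, forall s t, 0 < Pm L s t.
Proof.
have [M HM] := bound (d * d).
exists M => s [t1 t2].
pose u := (t1 + (d - 1) * (s.1 + Sg q M * s.2)) %% d.
pose v := (t2 + (d - 1) * (q ^ M * s.2)) %% d.
have lu : u < d by apply: ltn_pmod; exact: d0.
have lv : v < d by apply: ltn_pmod; exact: d0.
have [|b [lb [Hu Hv]]] := HM u v _ lv.
  apply: (@leq_trans (u * d + d)); first by rewrite ltn_add2l.
  by rewrite addnC -mulSn leq_mul2r lu orbT.
have lbM : b < q ^ M by apply: (leq_trans lb); apply: ltnW; apply: ltn_expl.
apply: (leq_trans _ (le_sum_nat (fun b => ((tr M s b == (t1, t2)) : nat)) lbM)).
rewrite lt0b /tr; apply/eqP.
have dd : forall x y, x + (y + (d - 1) * x) = x * d + y.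
  by move=> x y; case: d d2 => // d' _; rewrite subSS subn0; ring.
congr pair; apply: val_inj => /=.
  by rewrite -modnDmr Hu modn_mod modnDmr dd modnMDl modn_small.
by rewrite -modnDmr Hv modn_mod modnDmr dd modnMDl modn_small.
Qed.
Lemma count_phi (psi theta x : int) :
  \sum_(t : G) ((d%:Z %| (psi * t.1%:Z + theta * t.2%:Z + x)%R)%Z : nat) =
  (d * gcdn `|theta| (gcdn `|psi| d) * ((gcdn `|theta| (gcdn `|psi| d))%:Z %| x)%Z)%N.
Proof.
rewrite (eq_bigr (fun t : G => ((d%:Z %| (psi * t.1%:Z + theta * t.2%:Z + x)%R)%Z : nat))) //.
rewrite -(pair_bigA _ (fun (t1 t2 : 'I_d) => ((d%:Z %| (psi * t1%:Z + theta * t2%:Z + x)%R)%Z : nat))) /=.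
rewrite exchange_big /=.
set g1 := gcdn `|psi| d; set g2 := gcdn `|theta| g1.
have -> : \sum_(j < d) \sum_(i < d) ((d%:Z %| (psi * i%:Z + theta * j%:Z + x)%R)%Z : nat)
   = \sum_(0 <= j < d) (g1 * ((g1%:Z %| (theta * j%:Z + x)%R)%Z : nat))%N.
  rewrite big_mkord; apply: eq_bigr => j _.
  rewrite -count1; last exact: d0.
  rewrite /F1 big_mkord; apply: eq_bigr => i _; congr (nat_of_bool (_ %| _)%Z).
  by rewrite addrA.
have g10 : 0 < g1 by rewrite gcdn_gt0 d0 orbT.
have gd : g1 %| d by apply: dvdn_gcdr.
rewrite -big_distrr /=.
have -> : index_iota 0 d = index_iota 0 (g1 * (d %/ g1)) by rewrite mulnC divnK.
rewrite split_sum.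
rewrite (eq_bigr (fun _ => g2 * ((g2%:Z %| x)%Z : nat))).
  rewrite sum_nat_const_nat subn0 !mulnA; congr (_ * _ * _).
  by rewrite mulnC divnK.
move=> i _.
transitivity (F1 g1 theta (theta * g1%:Z * i%:Z + x)%R).
  rewrite /F1; apply: eq_bigr => j _; congr (nat_of_bool (_ %| _)%Z).
  by rewrite PoszD PoszM; ring.
rewrite count1 //; congr (_ * nat_of_bool _).
rewrite -/g2 rpredDl //; apply: dvdz_mulr; apply: dvdz_mull.
by rewrite dvdzE !absz_nat dvdn_gcdr.
Qed.
End P4.


Section P5.
Import numFieldNormedType.Exports.
Local Open Scope ring_scope.
Local Open Scope classical_set_scope.
Variable R : realType.
Variables q d : nat.
Hypothesis q2 : (1 < q)%N.
Hypothesis d2 : (1 < d)%N.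
Local Notation G := ('I_d * 'I_d)%type.
Local Notation P := (Pm q d2).

Definition pr K s t : R := (P K s t)%:R / (q ^ K)%:R.
Definition ee K s t : R := pr K s t - ((d * d)%:R)^-1.
Definition nrm K s : R := \sum_(t : G) `|ee K s t|.

Lemma qK0 K : (q ^ K)%:R != 0 :> R.
Proof. by rewrite pnatr_eq0 -lt0n expn_gt0 (ltnW q2). Qed.

Lemma dd0 : (d * d)%:R != 0 :> R.
Proof. by rewrite pnatr_eq0 -lt0n muln_gt0 (ltnW d2). Qed.

Lemma cardG : #|{: G}| = (d * d)%N.
Proof. by rewrite card_prod card_ord. Qed.

Lemma sum_pr_row K s : \sum_(t : G) pr K s t = 1.
Proof. by rewrite /pr -mulr_suml -natr_sum row_sum divff // qK0. Qed.

Lemma sum_pr_col K t : \sum_(s : G) pr K s t = 1.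
Proof. by rewrite /pr -mulr_suml -natr_sum col_sum divff // qK0. Qed.

Lemma sum_unif : \sum_(t : G) ((d * d)%:R)^-1 = 1 :> R.
Proof. by rewrite sumr_const cardG -[_ *+ (d * d)]mulr_natr mulVf // dd0. Qed.

Lemma sum_ee K s : \sum_(t : G) ee K s t = 0.
Proof. by rewrite /ee sumrB sum_pr_row sum_unif subrr. Qed.

Lemma pr_CK K L s t : pr (K + L) s t = \sum_(u : G) pr K s u * pr L u t.
Proof.
rewrite /pr CK // natr_sum expnD natrM mulr_suml; apply: eq_bigr => u _.
rewrite natrM; field; apply/andP; split; exact: qK0.
Qed.

Lemma ee_CK K L s t : ee (K + L) s t = \sum_(u : G) ee K s u * pr L u t.
Proof.
rewrite /ee pr_CK; under [RHS]eq_bigr do rewrite mulrBl.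
by rewrite sumrB -mulr_sumr sum_pr_col mulr1.
Qed.

Lemma nrm_le2 K s : nrm K s <= 2.
Proof.
apply: (@le_trans _ _ (\sum_(t : G) (pr K s t + ((d * d)%:R)^-1))).
  apply: ler_sum => t _; rewrite /ee.
  apply: (le_trans (ler_normB _ _)).
  rewrite !ger0_norm // ?invr_ge0 ?ler0n //.
  by rewrite /pr divr_ge0 // ler0n.
by rewrite big_split /= sum_pr_row sum_unif.
Qed.

Lemma contract L0 : (forall s t, 0 < P L0 s t)%N ->
  forall K s, nrm (K + L0) s <= (1 - (d * d)%:R / (q ^ L0)%:R) * nrm K s.
Proof.
move=> HD K s.
set dl := ((q ^ L0)%:R : R)^-1.
have Hlow : forall u t, dl <= pr L0 u t.
  move=> u t; rewrite /pr -[X in X <= _]mul1r; apply: ler_wpM2r.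
    by rewrite invr_ge0 ler0n.
  by rewrite ler1n HD.
have E : forall t, ee (K + L0) s t = \sum_(u : G) ee K s u * (pr L0 u t - dl).
  move=> t; rewrite ee_CK; under [RHS]eq_bigr do rewrite mulrBr.
  by rewrite sumrB -mulr_suml sum_ee mul0r subr0.
rewrite /nrm.
apply: (@le_trans _ _ (\sum_(t : G) \sum_(u : G) `|ee K s u| * (pr L0 u t - dl))).
  apply: ler_sum => t _; rewrite E; apply: (le_trans (ler_norm_sum _ _ _)); apply: ler_sum => u _.
  by rewrite normrM (@ger0_norm _ (pr L0 u t - dl)) // subr_ge0 Hlow.
rewrite exchange_big /= mulr_sumr; apply: ler_sum => u _.
rewrite -mulr_sumr sumrB sum_pr_row sumr_const cardG mulrC.
apply: ler_wpM2r; first by [].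
by rewrite [X in _ <= 1 - X]mulrC mulr_natr.
Qed.
Lemma dd_le L0 : (forall s t, 0 < P L0 s t)%N -> (d * d <= q ^ L0)%N.
Proof.
move=> HD; pose s0 : G := (Ordinal (d0 d2), Ordinal (d0 d2)).
rewrite -(row_sum q d2 L0 s0) -cardG -sum1_card.
by apply: leq_sum => t _; apply: HD.
Qed.

Definition cc L0 : R := 1 - (d * d)%:R / (q ^ L0)%:R.

Lemma cc_ge0 L0 : (forall s t, 0 < P L0 s t)%N -> 0 <= cc L0.
Proof.
move=> HD; rewrite /cc subr_ge0 ler_pdivrMr ?mul1r ?ler_nat ?dd_le //.
by rewrite ltr0n expn_gt0 (ltnW q2).
Qed.

Lemma cc_lt1 L0 : cc L0 < 1.
Proof.
rewrite /cc ltrBlDr ltrDl divr_gt0 // ltr0n ?expn_gt0 ?(ltnW q2) //.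
by rewrite muln_gt0 (ltnW d2).
Qed.

Lemma decay L0 : (forall s t, 0 < P L0 s t)%N ->
  forall j r s, nrm (r + j * L0) s <= 2 * cc L0 ^+ j.
Proof.
move=> HD; elim=> [|j IH] r s; first by rewrite mul0n addn0 expr0 mulr1 nrm_le2.
rewrite mulSn addnCA addnC.
apply: (le_trans (contract HD _ _)).
rewrite exprS mulrCA; apply: ler_wpM2l; first exact: cc_ge0.
exact: IH.
Qed.

Lemma decayK L0 : (forall s t, 0 < P L0 s t)%N ->
  forall K s, nrm K s <= 2 * cc L0 ^+ (K %/ L0).
Proof.
move=> HD K s; rewrite {1}(divn_eq K L0) addnC.
exact: decay.
Qed.
Definition z0 : G := (Ordinal (d0 d2), Ordinal (d0 d2)).
Definition key n : G := tr q d2 0 z0 n.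
Definition Cn (Phi : pred G) N : nat := \sum_(0 <= n < N) (Phi (key n) : nat).
Definition rho (Phi : pred G) : R := (\sum_(t : G) (Phi t : nat))%:R / (d * d)%:R.

Lemma block (Phi : pred G) K a :
  \sum_(0 <= b < q ^ K) (Phi (key (q ^ K * a + b)) : nat) = \sum_(t : G) (Phi t : nat) * P K (key a) t.
Proof.
rewrite big_nat_cond.
rewrite (eq_bigr (fun b => \sum_(t : G) ((tr q d2 K (key a) b == t) : nat) * (Phi t : nat))); last first.
  move=> b /andP[/andP[_ lb] _].
  have -> : key (q ^ K * a + b) = tr q d2 K (key a) b.
    rewrite /key tr_comp // add0n /tr /z0 /=; congr pair; apply: val_inj => /=.
      by rewrite !muln0.
    by rewrite !muln0.
  by rewrite -(pick_sum (tr q d2 K (key a) b) (fun t => nat_of_bool (Phi t))).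
rewrite -big_nat_cond exchange_big /=; apply: eq_bigr => t _.
by rewrite -big_distrl /= mulrC.
Qed.

Lemma block_err (Phi : pred G) K s :
  `|(\sum_(t : G) (Phi t : nat) * P K s t)%:R - (q ^ K)%:R * rho Phi| <= (q ^ K)%:R * nrm K s.
Proof.
have E1 : ((\sum_(t : G) (Phi t : nat) * P K s t)%:R : R) = (q ^ K)%:R * \sum_(t : G) (Phi t : nat)%:R * pr K s t.
  rewrite natr_sum mulr_sumr; apply: eq_bigr => t _; rewrite natrM /pr.
  by field; apply: qK0.
have E2 : (q ^ K)%:R * rho Phi = (q ^ K)%:R * \sum_(t : G) (Phi t : nat)%:R * ((d * d)%:R)^-1.
  by rewrite /rho natr_sum mulr_suml.
rewrite E1 E2 -mulrBr -sumrB normrM ger0_norm ?ler0n //; apply: ler_wpM2l; first exact: ler0n.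
apply: (le_trans (ler_norm_sum _ _ _)); apply: ler_sum => t _.
rewrite -mulrBr normrM; case: (Phi t) => /=.
  by rewrite normr1 mul1r.
by rewrite normr0 mul0r.
Qed.
Lemma rho_ge0 Phi : 0 <= rho Phi.
Proof. by rewrite /rho divr_ge0 ?ler0n. Qed.

Lemma rho_le1 Phi : rho Phi <= 1.
Proof.
rewrite /rho ler_pdivrMr ?mul1r ?ler_nat; last by rewrite ltr0n muln_gt0 (ltnW d2).
rewrite -cardG -sum1_card; apply: leq_sum => t _; exact: leq_b1.
Qed.

Lemma bound_N (Phi : pred G) L0 (HD : forall s t, (0 < P L0 s t)%N) K N : (0 < N)%N ->
  `|rho Phi - (Cn Phi N)%:R / N%:R| <= 2 * cc L0 ^+ (K %/ L0) + (q ^ K)%:R / N%:R.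
Proof.
move=> N0.
set eps := 2 * cc L0 ^+ (K %/ L0).
have eps0 : 0 <= eps by rewrite /eps mulr_ge0 // exprn_ge0 // cc_ge0.
set Q := (q ^ K)%N.
have Q0 : (0 < Q)%N by rewrite expn_gt0 (ltnW q2).
set M := (N %/ Q)%N.
have QM : (Q * M <= N)%N by rewrite mulnC leq_divM.
have rlt : (N - Q * M < Q)%N.
  by rewrite {1}(divn_eq N Q) -/M mulnC addnC addnK ltn_pmod.
set A := (\sum_(0 <= a < M) \sum_(t : G) (Phi t : nat) * P K (key a) t)%N.
set Rm := (\sum_(Q * M <= n < N) (Phi (key n) : nat))%N.
have Csplit : Cn Phi N = (A + Rm)%N.
  rewrite /Cn (@big_cat_nat _ _ _ (Q * M) 0 N _ _ (leq0n _) QM) /= split_sum.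
  by congr (_ + _)%N; apply: eq_bigr => a _; apply: block.
have HRm : (Rm <= N - Q * M)%N.
  rewrite /Rm -[(N - Q * M)%N]muln1 -sum_nat_const_nat; apply: leq_sum => n _; exact: leq_b1.
have Aerr : `|A%:R - (Q * M)%:R * rho Phi| <= (Q * M)%:R * eps.
  have -> : (Q * M)%:R * rho Phi = \sum_(0 <= a < M) ((Q%:R : R) * rho Phi).
    by rewrite sumr_const_nat subn0 -[_ *+ M]mulr_natl natrM; ring.
  have -> : (Q * M)%:R * eps = \sum_(0 <= a < M) ((Q%:R : R) * eps).
    by rewrite sumr_const_nat subn0 -[_ *+ M]mulr_natl natrM; ring.
  rewrite /A natr_sum -sumrB; apply: (le_trans (ler_norm_sum _ _ _)); apply: ler_sum => a _.
  apply: (le_trans (block_err _ _ _)); apply: ler_wpM2l; first exact: ler0n.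
  exact: decayK.
set NR := (N%:R : R).
have NR0 : 0 < NR by rewrite /NR ltr0n.
have ENR : NR = (Q * M)%:R + (N - Q * M)%:R by rewrite /NR -natrD subnKC.
have HRm' : (Rm%:R : R) <= (N - Q * M)%:R by rewrite ler_nat.
have Hr' : ((N - Q * M)%:R : R) <= Q%:R by rewrite ler_nat ltnW.
have HQM : ((Q * M)%:R : R) <= NR by rewrite ler_nat.
have Hrho0 := rho_ge0 Phi; have Hrho1 := rho_le1 Phi.
have X1 : ((N - Q * M)%:R : R) * rho Phi <= (N - Q * M)%:R.
  by rewrite -[X in _ <= X]mulr1 ler_wpM2l ?ler0n.
have X2 : 0 <= ((N - Q * M)%:R : R) * rho Phi by rewrite mulr_ge0 ?ler0n.
have X3 : (Q * M)%:R * eps <= NR * eps by rewrite ler_wpM2r.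
have Key : `|NR * rho Phi - (Cn Phi N)%:R| <= NR * eps + Q%:R.
  rewrite Csplit natrD ENR mulrDl.
  have -> : (Q * M)%:R * rho Phi + (N - Q * M)%:R * rho Phi - (A%:R + Rm%:R)
     = ((Q * M)%:R * rho Phi - A%:R) + ((N - Q * M)%:R * rho Phi - Rm%:R) by ring.
  apply: (le_trans (ler_normD _ _)).
  rewrite distrC in Aerr.
  have : `|(N - Q * M)%:R * rho Phi - Rm%:R| <= Q%:R.
    rewrite ler_norml; apply/andP; split.
      have : (0 : R) <= Rm%:R by rewrite ler0n.
      lra.
    have : (0 : R) <= Rm%:R by rewrite ler0n.
    lra.
  rewrite -ENR; lra.
have -> : rho Phi - (Cn Phi N)%:R / NR = (NR * rho Phi - (Cn Phi N)%:R) / NR.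
  by field; rewrite gt_eqF.
rewrite normrM normfV (gtr0_norm NR0) ler_pdivrMr //.
rewrite mulrDl divfK ?gt_eqF //.
by rewrite [eps * NR]mulrC.
Qed.
Lemma dens_cvg (Phi : pred G) : (fun N : nat => ((Cn Phi N)%:R / N%:R : R)) @ \oo --> rho Phi.
Proof.
have [L0 HD] := doeblin q2 d2.
have L00 : (0 < L0)%N.
  have := dd_le HD; case: L0 {HD} => // /=; rewrite expn0 => H.
  have : (4 <= d * d)%N by apply: (@leq_mul 2 2).
  by move=> H4; have := leq_trans H4 H.
apply/cvgrPdist_le => e e0.
have c1 : `|cc L0| < 1 by rewrite ger0_norm ?cc_ge0 // cc_lt1.
have e4 : 0 < e / 4 by rewrite divr_gt0.
have [j _ Hj] := (cvgrPdist_lt _ _).1 (cvg_expr c1) _ e4.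
have Hcj := Hj j (leqnn j); rewrite /= sub0r normrN ger0_norm ?exprn_ge0 ?cc_ge0 // in Hcj.
set K := (j * L0)%N.
have KL : (K %/ L0 = j)%N by rewrite /K mulnK.
have x0 : 0 <= (q ^ K)%:R * 2 / e by apply: divr_ge0; [apply: mulr_ge0 | apply: ltW].
pose N0 := Num.Def.archi_bound ((q ^ K)%:R * 2 / e).
exists N0.+1 => // N /= hN.
have N0' : (0 < N)%N by apply: leq_trans hN.
apply: (le_trans (bound_N Phi HD K N0')); rewrite KL.
have HN : (q ^ K)%:R / N%:R <= e / 2.
  have Nr : 0 < (N%:R : R) by rewrite ltr0n.
  rewrite ler_pdivrMr // -ler_pdivrMl ?divr_gt0 //.
  have -> : (e / 2)^-1 * (q ^ K)%:R = (q ^ K)%:R * 2 / e :> R by field; rewrite gt_eqF.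
  apply: (le_trans (ltW (archi_boundP x0))); rewrite -/N0 ler_nat; exact: ltnW.
lra.
Qed.
End P5.


Unset Implicit Arguments.
Local Open Scope ring_scope.

Theorem theorem3p2 (R : realType) (q d : nat) (psi theta x : int) :
  (2 <= q)%N -> (2 <= d)%N -> psi != 0 ->
  has_density
    (fun n : nat => (d%:Z %| psi * (wq q n)%:Z + theta * n%:Z + x)%Z)
    (if (gcdz (gcdz psi theta) d %| gcdz x d)%Z
     then (`|gcdz (gcdz psi theta) d|%N)%:R / d%:R : R
     else 0).
Proof.
move=> q2 d2 _.
pose Phi : pred ('I_d * 'I_d) := fun t => (d%:Z %| psi * t.1%:Z + theta * t.2%:Z + x)%Z.
have EP : forall n, (d%:Z %| psi * (wq q n)%:Z + theta * n%:Z + x)%Z = Phi (key q d2 n).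
  move=> n; rewrite /Phi /key /tr /= !muln0 !add0n.
  set w := wq q n.
  have Ew : w%:Z = (w %/ d)%:Z * d%:Z + (w %% d)%:Z by rewrite -PoszM -PoszD -divn_eq.
  have En : n%:Z = (n %/ d)%:Z * d%:Z + (n %% d)%:Z by rewrite -PoszM -PoszD -divn_eq.
  have E : psi * w%:Z + theta * n%:Z + x =
     (psi * (w %% d)%:Z + theta * (n %% d)%:Z + x) + d%:Z * (psi * (w %/ d)%:Z + theta * (n %/ d)%:Z).
    by rewrite {1}Ew {1}En; ring.
  by rewrite E rpredDr // dvdz_mulr.
have Ecount : forall N, count_below (fun n : nat => (d%:Z %| psi * (wq q n)%:Z + theta * n%:Z + x)%Z) N = Cn q d2 Phi N.
  move=> N; rewrite /count_below -sum1dep_card big_mkcond /= /Cn big_mkord.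
  by apply: eq_bigr => n _; rewrite EP; case: (Phi _).
have Erho : rho R Phi = (if (gcdz (gcdz psi theta) d %| gcdz x d)%Z
     then (`|gcdz (gcdz psi theta) d|%N)%:R / d%:R : R else 0).
  rewrite /rho.
  have -> : (\sum_(t : 'I_d * 'I_d) (Phi t : nat))%N =
      (d * gcdn `|theta| (gcdn `|psi| d) * ((gcdn `|theta| (gcdn `|psi| d))%:Z %| x)%Z)%N.
    exact: (count_phi d2 psi theta x).
  set g := gcdn `|theta| (gcdn `|psi| d).
  have Eg : gcdz (gcdz psi theta) d = g%:Z.
    by rewrite /gcdz !absz_nat /g gcdnAC gcdnC.
  have gd : (g%:Z %| d%:Z)%Z.
    by rewrite dvdzE !absz_nat /g; apply: (dvdn_trans (dvdn_gcdr _ _)); apply: dvdn_gcdr.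
  rewrite Eg absz_nat dvdz_gcd gd andbT.
  have d0' : (d%:R : R) != 0 by rewrite pnatr_eq0 -lt0n (ltnW d2).
  case: (g%:Z %| x)%Z => /=.
    by rewrite muln1 !natrM; field.
  by rewrite muln0 mul0r.
rewrite /has_density.
have -> : (fun N : nat => ((count_below (fun n : nat => (d%:Z %| psi * (wq q n)%:Z + theta * n%:Z + x)%Z) N)%:R / N%:R : R))
   = (fun N : nat => ((Cn q d2 Phi N)%:R / N%:R : R)).
  by apply: funext => N; rewrite Ecount.
rewrite -Erho; exact: dens_cvg.
Qed.
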